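(* Let $\Gamma=(U\cup V,E)$ be a $3$-regular bipartite graph and let $\hat\Gamma$, $\eta$, $\eta'$, $\mathrm{sgn}$ and $\mu(F,f)$ be as described in the context. For any $2$-factor $F$ of $\Gamma$, any functions $f,g:F\to\{0,1\}$ and any perfect matchings $\mu_1\in\mu(F,f)$ and $\mu_2\in\mu(F,g)$, we have $\mathrm{sgn}(\mu_1)=\mathrm{sgn}(\mu_2)$.
   Context: Construction of $\hat\Gamma$: for each vertex $v$ of $\Gamma$ with neighbours $x,y,z$, there are four inner vertices $a_{v,S}$, one for each subset $S\subseteq\{x,y,z\}$ of even size (the set $I_v$), and six outer vertices $b_{v,u,0},b_{v,u,1}$ for $u\in\{x,y,z\}$ (the set $O_v$). Within the gadget, $a_{v,S}$ is adjacent to $b_{v,u,1}$ if $u\in S$ and to $b_{v,u,0}$ if $u\notin S$. For each edge $e=\{u,v\}\in E$ and $i\in\{0,1\}$ there is an edge $e_i$ joining $b_{v,u,i}$ and $b_{u,v,i}$. No other edges. Let $X=\bigcup_{v\in U}I_v\cup\bigcup_{v\in V}O_v$, $Y=\bigcup_{v\in V}I_v\cup\bigcup_{v\in U}O_v$, $n=|X|=|Y|=10|U|$, and fix bijections $\eta:X\to[n]$, $\eta':Y\to[n]$. A perfect matching is a bijection $\mu:X\to Y$ with $\mu(x)$ adjacent to $x$ for all $x$; $\mathrm{sgn}(\mu)$ is the sign of the permutation $\eta'\circ\mu\circ\eta^{-1}$ of $[n]$. A perfect matching $\mu$ is uniform if for every $e\in E$ at most one of $e_0,e_1$ is in $\mu$;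 then $F_\mu$ is the set of $e\in E$ with exactly one of $e_0,e_1$ in $\mu$, and $f_\mu(e)=i$ iff $e_i\in\mu$. A $2$-factor of $\Gamma$ is a set $F\subseteq E$ such that every vertex is incident to exactly two edges of $F$. $\mu(F,f)$ is the set of uniform perfect matchings $\mu$ with $F_\mu=F$ and $f_\mu=f$. *)

(* Defs.v *)
From mathcomp Require Import all_boot all_fingroup.
Set Implicit Arguments. Unset Strict Implicit. Unset Printing Implicit Defensive.

Section Gadget.
Variables (U V : finType) (r : U -> V -> bool).
(* Gamma = (U \cup V, E) with E = { {u,v} | r u v } : a simple bipartite graph. *)

Definition vtx := (U + V)%type.

Definition isU (w : vtx) : bool := if w is inl _ then true else false.

Definition nbr (w x : vtx) : bool :=
  match w, x with
  | inl u, inr v => r u v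
  | inr v, inl u => r u v
  | _, _ => false
  end.

Definition N (w : vtx) : {set vtx} := [set x | nbr w x].

Definition cubic : Prop := forall w : vtx, #|N w| = 3.

(* vertices of hat Gamma (together with junk, filtered by the predicates below):
   inl (v, S)    stands for a_{v,S}
   inr (v, u, i) stands for b_{v,u,i} *)
Definition HV := ((vtx * {set vtx}) + (vtx * vtx * bool))%type.

Definition inner_ok (v : vtx) (S : {set vtx}) : bool := (S \subset N v) && ~~ odd #|S|.
Definition outer_ok (v u : vtx) : bool := nbr v u.

Definition Xset : {set HV} :=
  [set h : HV | match h with
                | inl (v, A) => isU v && inner_ok v A
                | inr (v, u, _) => ~~ isU v && outer_ok v u
                end].
Definition Yset : {set HV} :=
  [set h : HV | match h with
                | inl (v, A) => ~~ isU v && inner_ok v A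
                | inr (v, u, _) => isU v && outer_ok v u
                end].

Definition Xt := {h : HV | h \in Xset}.
Definition Yt := {h : HV | h \in Yset}.

Definition hadj (h h' : HV) : bool :=
  match h, h' with
  | inl (v, A), inr (v', u, i) => (v' == v) && nbr v u && (i == (u \in A))
  | inr (v', u, i), inl (v, A) => (v' == v) && nbr v u && (i == (u \in A))
  | inr (v, u, i), inr (v', u', i') =>
      (v' == u) && (u' == v) && (i == i') && nbr v u
  | _, _ => false
  end.

Definition perfect_matching (mu : Xt -> Yt) : Prop :=
  bijective mu /\ forall x : Xt, hadj (val x) (val (mu x)).

(* For an edge e = {u,v} (u in U, v in V), e_i joins b_{v,u,i} (in X) and
   b_{u,v,i} (in Y); e_i \in mu means mu maps the former to the latter. *)
Definition edge_in (mu : Xt -> Yt) (u : U) (v : V) (i : bool) : Prop :=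
  exists x : Xt, val x = inr (inr v, inl u, i) /\ val (mu x) = inr (inl u, inr v, i).

Definition two_factor (F : {set U * V}) : Prop :=
  [/\ forall e, e \in F -> r e.1 e.2,
      forall u : U, #|[set v : V | (u, v) \in F]| = 2
    & forall v : V, #|[set u : U | (u, v) \in F]| = 2].

(* mu \in mu(F,f): mu is a uniform perfect matching with F_mu = F and f_mu = f
   (on F). For every edge e of Gamma and i, e_i \in mu iff e \in F and i = f e. *)
Definition in_muFf (F : {set U * V}) (f : U * V -> bool) (mu : Xt -> Yt) : Prop :=
  perfect_matching mu /\
  forall (u : U) (v : V) (i : bool), r u v ->
    (edge_in mu u v i <-> ((u, v) \in F /\ i = f (u, v))).

End Gadget.

Arguments in_muFf [U V] r F f mu.
Arguments perfect_matching [U V] r mu.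
Arguments edge_in [U V] r mu u v i.

(* Main.v *)
Require Import Defs.
From mathcomp Require Import all_boot all_fingroup.
Set Implicit Arguments. Unset Strict Implicit. Unset Printing Implicit Defensive.

Section Alg.
Variable T : eqType.
Definition step (x : T) (f : T -> T) : T -> T :=
  fun z => if f z == x then f x else if f z == f x then x else f z.
Fixpoint alg (xs : seq T) (f : T -> T) : bool :=
  if xs is x :: xs' then (f x != x) (+) alg xs' (step x f) else false.

Lemma alg_ext xs f g : (forall z, z \in xs -> f z = g z) -> alg xs f = alg xs g.
Proof.
elim: xs f g => [//|x xs IH] f g H /=.
rewrite H ?mem_head //; congr addb; apply: IH => z zin.
by rewrite /step !H ?mem_head // inE zin orbT.
Qed.
End Alg.

Lemma alg_transport (T1 T2 : eqType) (h : T1 -> T2) (hinj : injective h)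
  (xs : seq T1) (sg : T1 -> T1) (f : T2 -> T2) :
  (forall b, b \in xs -> f (h b) = h (sg b)) -> alg (map h xs) f = alg xs sg.
Proof.
elim: xs sg f => [//|x xs IH] sg f H /=.
rewrite H ?mem_head // (inj_eq hinj); congr addb; apply: IH => b bin.
have Hb : b \in x :: xs by rewrite inE bin orbT.
by rewrite /step !H ?mem_head // !(inj_eq hinj); case: ifP => _ //; case: ifP.
Qed.

Lemma odd_alg (T : finType) (xs : seq T) (s : {perm T}) :
  (forall z, z \notin xs -> s z = z) -> odd_perm s = alg xs s.
Proof.
elim: xs s => [|x xs IH] s H /=.
  have -> : s = 1%g by apply/permP => z; rewrite H // perm1.
  by rewrite odd_perm1.
pose s' := (s * tperm x (s x))%g.
have Hs : odd_perm s = odd_perm s' (+) (s x != x).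
  by rewrite /s' odd_permM odd_tperm (eq_sym x) -addbA addbb addbF.
rewrite Hs (IH s') 1?addbC; last first.
  move=> z zn; rewrite /s' permM.
  case: (eqVneq z x) => [->|zx]; first by rewrite tpermR.
  have sz : s z = z by apply: H; rewrite inE negb_or zx.
  rewrite sz tpermD //; first by rewrite eq_sym.
  apply: contra zx => /eqP e; apply/eqP; apply: (@perm_inj _ s).
  by rewrite sz e.
congr addb; apply: alg_ext => z _; rewrite /s' permM /step.
case: tpermP => [->|->|a b]; rewrite ?eqxx //.
  by case: eqP => [->|].
by rewrite (introF eqP a) (introF eqP b).
Qed.

Section Restr.
Variables (T : finType) (s : {perm T}) (B : finType) (blk : T -> B).
Hypothesis hb : forall z, blk (s z) = blk z.

Definition restr_fun (P : pred B) z := if blk z \in P then s z else z.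
Lemma restr_inj (P : pred B) : injective (restr_fun P).
Proof.
move=> x y; rewrite /restr_fun.
case: (boolP (blk x \in P)) => Px; case: (boolP (blk y \in P)) => Py //.
- by move/perm_inj.
- by move=> e; move: Py; rewrite -e hb Px.
- by move=> e; move: Px; rewrite e hb Py.
Qed.
Definition restrP P := perm (@restr_inj P).
Definition rb (b : B) := restrP (pred1 b).

Lemma rbE b z : rb b z = if blk z == b then s z else z.
Proof. by rewrite /rb /restrP permE /restr_fun. Qed.

Lemma odd_blocks : odd_perm s = \big[addb/false]_(b <- enum B) odd_perm (rb b).
Proof.
have H : forall bs : seq B, uniq bs ->
   odd_perm (restrP (mem bs)) = \big[addb/false]_(b <- bs) odd_perm (rb b).
  elim=> [|b bs IH] /=.
    move=> _; rewrite big_nil.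
    have -> : restrP (mem [::]) = 1%g by apply/permP => z; rewrite permE perm1 /restr_fun.
    by rewrite odd_perm1.
  case/andP => bn ubs; rewrite big_cons -IH //.
  have -> : restrP (mem (b :: bs)) = (rb b * restrP (mem bs))%g.
    apply/permP => z; rewrite permM rbE !permE /restr_fun inE.
    case: (eqVneq (blk z) b) => [e|ne] /=; first by rewrite hb e (negbTE bn).
    by [].
  by rewrite odd_permM.
rewrite -H ?enum_uniq //; congr odd_perm; apply/permP => z.
by rewrite permE /restr_fun mem_enum.
Qed.
End Restr.

Inductive coord := Cp | Cq | Cw.
Definition ceq (a b : coord) := match a, b with Cp,Cp | Cq,Cq | Cw,Cw => true | _,_ => false end.
Definition bitc (c : coord) (b : bool*bool) := match c with Cp => b.1 | Cq => b.2 | Cw => b.1 (+) b.2 end.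
Definition extok (fp fq : bool) (c : coord) (b : bool*bool) :=
  match c with Cp => b.1 != fp | Cq => b.2 != fq | Cw => true end.
Definition bb4 : seq (bool*bool) := [:: (false,false); (false,true); (true,false); (true,true)].
Definition Valid fp fq (c : bool*bool -> coord) :=
  all (fun b => extok fp fq (c b) b) bb4 &&
  all (fun b => all (fun b' => (b == b') || ~~ (ceq (c b) (c b') && (bitc (c b) b == bitc (c b') b'))) bb4) bb4.
Definition dfl (dp dq : bool) c := match c with Cp => dp | Cq => dq | Cw => false end.
Definition ca (fp fq : bool) (b : bool*bool) := if b.1 == fp then Cw else if b.2 == fq then Cp else Cq.
Definition cb (fp fq : bool) (b : bool*bool) := if b.2 == fq then Cw else if b.1 == fp then Cq else Cp.

Lemma classify fp fq c : Valid fp fq c ->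
  (forall b, c b = ca fp fq b) \/ (forall b, c b = cb fp fq b).
Proof.
rewrite /Valid /=.
case E1 : (c (false,false)); case E2 : (c (false,true));
case E3 : (c (true,false)); case E4 : (c (true,true));
case: fp; case: fq => //= _;
first [ by left; case=> [[] []]; rewrite ?E1 ?E2 ?E3 ?E4
      | by right; case=> [[] []]; rewrite ?E1 ?E2 ?E3 ?E4 ].
Qed.

Lemma ceqP a b : reflect (a = b) (ceq a b).
Proof. by case: a; case: b; constructor. Qed.

Lemma mem_bb4 b : b \in bb4.
Proof. by case: b => [[] []]. Qed.

Lemma valid_inj fp fq c b b' : Valid fp fq c -> c b = c b' ->
  bitc (c b) b = bitc (c b') b' -> b = b'.
Proof.
case/andP => _ /allP /(_ b (mem_bb4 b)) /allP /(_ b' (mem_bb4 b')).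
by case/orP => [/eqP //|]; move=> /negP H e1 e2; case: H; rewrite e2 e1 eqxx andbT; apply/ceqP.
Qed.

Definition sol (c1 c2 : bool*bool -> coord) dp dq (b : bool*bool) :=
  head b [seq b' <- bb4 | ceq (c2 b') (c1 b) &&
             (bitc (c1 b) b' == bitc (c1 b) b (+) dfl dp dq (c1 b))].

Definition pick_c (i : bool) fp fq := if i then ca fp fq else cb fp fq.

Lemma sol_ok fp fq gp gq i j b :
  let c1 := pick_c i fp fq in let c2 := pick_c j gp gq in
  c2 (sol c1 c2 (fp != gp) (fq != gq) b) = c1 b /\
  bitc (c1 b) (sol c1 c2 (fp != gp) (fq != gq) b) =
    bitc (c1 b) b (+) dfl (fp != gp) (fq != gq) (c1 b).
Proof. by case: fp; case: fq; case: gp; case: gq; case: i; case: j; case: b => [[] []]. Qed.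

Lemma sol_alg fp fq gp gq i j :
  alg bb4 (sol (pick_c i fp fq) (pick_c j gp gq) (fp != gp) (fq != gq)) = (fp != gp) (+) (fq != gq).
Proof. by case: fp; case: fq; case: gp; case: gq; case: i; case: j. Qed.

Lemma local_parity fp fq gp gq (c1 c2 : bool*bool -> coord) (sg : bool*bool -> bool*bool) :
  Valid fp fq c1 -> Valid gp gq c2 ->
  (forall b, c2 (sg b) = c1 b /\
     bitc (c1 b) (sg b) = bitc (c1 b) b (+) dfl (fp != gp) (fq != gq) (c1 b)) ->
  alg bb4 sg = (fp != gp) (+) (fq != gq).
Proof.
move=> V1 V2 H.
have [i E1] : exists i, forall b, c1 b = pick_c i fp fq b.
  by case: (classify V1) => E; [exists true | exists false].
have [j E2] : exists j, forall b, c2 b = pick_c j gp gq b.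
  by case: (classify V2) => E; [exists true | exists false].
rewrite -(sol_alg fp fq gp gq i j); apply: alg_ext => b _.
have [h1 h2] := H b; have [k1 k2] := sol_ok fp fq gp gq i j b.
apply: (valid_inj V2).
  by rewrite h1 E2 k1 E1.
by rewrite h1 h2 !E1 E2 k1 k2.
Qed.

Lemma ValidP fp fq c : (forall b, extok fp fq (c b) b) ->
  (forall b b', c b = c b' -> bitc (c b) b = bitc (c b') b' -> b = b') -> Valid fp fq c.
Proof.
move=> H1 H2; apply/andP; split; apply/allP => b _ //.
apply/allP => b' _; case: (eqVneq b b') => //= bb; apply/negP => /andP [/ceqP e1 /eqP e2].
by move: bb; rewrite (H2 _ _ e1 e2) eqxx.
Qed.

Lemma alg_tau dp dq : alg bb4 (fun b => (b.1, b.2 (+) (if b.1 then dq else dp))) = dp (+) dq.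
Proof. by case: dp; case: dq. Qed.

Section Glue.
Variables (U V : finType) (r : U -> V -> bool).
Local Notation vt := (vtx U V).
Local Notation HVt := (HV U V).
Local Notation X := (Xt r).
Local Notation Y := (Yt r).
Variable F : {set U * V}.
Hypothesis HF : two_factor r F.

Definition Fe (a b : vt) : bool :=
  match a, b with inl u, inr v => (u,v) \in F | inr v, inl u => (u,v) \in F | _, _ => false end.
Definition fv (h : U * V -> bool) (a b : vt) : bool :=
  match a, b with inl u, inr v => h (u,v) | inr v, inl u => h (u,v) | _, _ => false end.

Lemma Fe_sym a b : Fe a b = Fe b a. Proof. by case: a; case: b. Qed.
Lemma fv_sym h a b : fv h a b = fv h b a. Proof. by case: a; case: b. Qed.
Lemma nbr_sym a b : nbr r a b = nbr r b a. Proof. by case: a; case: b. Qed.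
Lemma Fe_nbr a b : Fe a b -> nbr r a b.
Proof. by case: HF => HF1 _ _; case: a; case: b => //= x y /HF1. Qed.

Definition extH (h : U * V -> bool) (z : HVt) : bool :=
  match z with inr (a, c, i) => Fe a c && (i == fv h a c) | _ => false end.

Lemma extH_sym h a c i : extH h (inr (a, c, i)) = extH h (inr (c, a, i)).
Proof. by rewrite /= Fe_sym fv_sym. Qed.

Lemma inX (z : HVt) : (z \in Xset r) =
  match z with inl (v, A) => isU v && inner_ok r v A | inr (v, u, _) => ~~ isU v && outer_ok r v u end.
Proof. by rewrite inE. Qed.
Lemma inY (z : HVt) : (z \in Yset r) =
  match z with inl (v, A) => ~~ isU v && inner_ok r v A | inr (v, u, _) => isU v && outer_ok r v u end.
Proof. by rewrite inE. Qed.

Section Match.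
Variables (h : U * V -> bool) (mu : X -> Y) (muI : Y -> X).
Hypothesis Hmu : in_muFf r F h mu.
Hypotheses (muK : cancel mu muI) (muIK : cancel muI mu).

Lemma mu_adj x : hadj r (val x) (val (mu x)).
Proof. by case: Hmu => [[_ H]] _. Qed.

Lemma edge_iff (x : X) a c i : val x = inr (a, c, i) ->
  (val (mu x) = inr (c, a, i)) <-> extH h (inr (a, c, i)).
Proof.
move=> Ex; have := valP x; rewrite Ex inX /outer_ok.
case: a Ex => [u|v] Ex //=; case: c Ex => [u|v'] Ex //= ruv.
case: Hmu => _ /(_ u v i ruv) [E1 E2]; split.
  by move=> Em; case: E1; [exists x | move=> -> ->; rewrite eqxx].
case/andP=> uF /eqP ei; have [x' [Ex' Em']] := E2 (conj uF ei).
by have -> : x = x' by apply: val_inj; rewrite Ex Ex'.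
Qed.

Lemma mu_outer (x : X) a c i : val x = inr (a, c, i) ->
  if extH h (inr (a, c, i)) then val (mu x) = inr (c, a, i)
  else exists A, val (mu x) = inl (a, A) /\ i = (c \in A).
Proof.
move=> Ex; have adj := mu_adj x; rewrite Ex in adj.
have EI := edge_iff Ex.
case E: (val (mu x)) adj EI => [[a' A]|[[a' c'] i']] /= adj EI.
  case/andP: adj => /andP [/eqP ea _] /eqP ei; subst a' i.
  case: ifP => e; last by exists A.
  by have := proj2 EI e.
case/andP: adj => /andP [/andP [/eqP ea /eqP ec] /eqP ei] _; subst a' c' i'.
have : extH h (inr (a, c, i)) by apply: (proj1 EI).
by move=> /= ->.
Qed.

Lemma mu_inner (x : X) a A : val x = inl (a, A) ->
  exists2 c, nbr r a c & val (mu x) = inr (a, c, c \in A) /\ ~~ extH h (inr (a, c, c \in A)).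
Proof.
move=> Ex; have adj := mu_adj x; rewrite Ex in adj.
case E: (val (mu x)) adj => [[a' A']|[[a' c] i]] //= /andP [/andP [/eqP ea nb] /eqP ei].
subst a' i; exists c => //; split => //; apply/negP => e.
have Hz : inr (c, a, c \in A) \in Xset r.
  have := valP (mu x); rewrite E inY => /andP [aU _].
  move: aU nb; rewrite inX /outer_ok; case: a {Ex E e} => // u _; case: c => //= v.
pose z : X := exist (fun w => w \in Xset r) _ Hz.
have := edge_iff (erefl (val z)); rewrite -extH_sym [extH _ _]/= e => /proj2 /(_ isT) Ez.
have : z = x by apply: (can_inj muK); apply: val_inj; rewrite Ez E.
by move/(congr1 val); rewrite Ex.
Qed.

Lemma muI_outer (y : Y) a c j : val y = inr (a, c, j) ->
  if extH h (inr (a, c, j)) then val (muI y) = inr (c, a, j)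
  else exists A, val (muI y) = inl (a, A) /\ j = (c \in A).
Proof.
move=> Ey; have adj := mu_adj (muI y); rewrite muIK Ey in adj.
case E: (val (muI y)) adj => [[a' A]|[[a' c'] i]] /= adj.
  case/andP: adj => /andP [/eqP ea _] /eqP ej; subst a' j.
  have [c2 _ [e1 e2]] := mu_inner E.
  rewrite muIK Ey in e1; case: e1 => ec; subst c2.
  by move: e2; rewrite [extH _ _]/= => /negbTE ->; exists A.
case/andP: adj => /andP [/andP [/eqP ea /eqP ec] /eqP ei] _; subst a c j.
have := mu_outer E; rewrite muIK Ey.
by rewrite /= Fe_sym fv_sym; case: ifP => // _ [A []].
Qed.

Lemma muI_inner (y : Y) a A : val y = inl (a, A) ->
  exists2 c, nbr r a c & val (muI y) = inr (a, c, c \in A) /\ ~~ extH h (inr (a, c, c \in A)).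
Proof.
move=> Ey; have adj := mu_adj (muI y); rewrite muIK Ey in adj.
case E: (val (muI y)) adj => [[a' A']|[[a' c] i]] //= /andP [/andP [/eqP ea nb] /eqP ei].
subst a' i; exists c => //.
split => //; have := mu_outer E; rewrite muIK Ey.
by rewrite [extH _ _]/=; case: ifP.
Qed.
End Match.
End Glue.

Section Gadget.
Variables (U V : finType) (r : U -> V -> bool).
Local Notation vt := (vtx U V).
Variable F : {set U * V}.
Hypothesis HF : two_factor r F.
Hypothesis Hcubic : cubic r.

Lemma gadget_struct a : exists P, exists Q, exists W,
  [/\ N r a = [set P; Q; W], uniq [:: P; Q; W], Fe F a P, Fe F a Q &
      forall c, Fe F a c -> (c == P) || (c == Q)].
Proof.
have HFa : #|[set c | Fe F a c]| = 2.
  case: HF => _ H2 H3; case: a => [u|v].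
    have -> : [set c | Fe F (inl u) c] = inr @: [set v | (u, v) \in F].
      apply/setP => c; rewrite inE; case: c => [u'|v] /=.
        by apply/esym/imsetP => -[x _].
      apply/idP/imsetP => [uv|[x]]; first by exists v; rewrite ?inE.
      by rewrite inE => ? [->].
    by rewrite card_imset ?H2 //; move=> x y [].
  have -> : [set c | Fe F (inr v) c] = inl @: [set u | (u, v) \in F].
    apply/setP => c; rewrite inE; case: c => [u|v'] /=.
      apply/idP/imsetP => [uv|[x]]; first by exists u; rewrite ?inE.
      by rewrite inE => ? [->].
    by apply/esym/imsetP => -[x _].
  by rewrite card_imset ?H3 //; move=> x y [].
have /cards2P [P [Q [PQ EFa]]] : #|[set c | Fe F a c]| == 2 by rewrite HFa.
have FP : Fe F a P by have := set21 P Q; rewrite -EFa inE.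
have FQ : Fe F a Q by have := set22 P Q; rewrite -EFa inE.
have NP : P \in N r a by rewrite inE; apply: (Fe_nbr HF).
have NQ : Q \in N r a by rewrite inE; apply: (Fe_nbr HF).
have NQ' : Q \in N r a :\ P by rewrite in_setD1 eq_sym PQ NQ.
have : #|N r a :\ P :\ Q| == 1.
  by move: (Hcubic a); rewrite (cardsD1 P) NP (cardsD1 Q (N r a :\ P)) NQ' => /eqP.
case/cards1P => W EW.
have WN : W \in N r a :\ P :\ Q by rewrite EW set11.
exists P, Q, W; split => //.
- apply/setP => c; move/setP: EW => /(_ c); rewrite !inE; rewrite !inE in NP NQ.
  case: (eqVneq c P) => [->|cP]; first by rewrite NP.
  by case: (eqVneq c Q) => [->|cQ] /=; [rewrite NQ | move=> ->].
- move: WN; rewrite !inE => /andP [WQ /andP [WP _]].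
  by rewrite /= !inE !negb_or PQ (eq_sym P W) (eq_sym Q W) WP WQ.
- move=> c Fc; have : c \in [set c | Fe F a c] by rewrite inE.
  by rewrite EFa !inE.
Qed.
End Gadget.

Section Gad.
Variables (U V : finType) (r : U -> V -> bool).
Local Notation vt := (vtx U V).
Variable F : {set U * V}.
Variables a P Q W : vt.
Hypotheses (HN : N r a = [set P; Q; W]) (HU : uniq [:: P; Q; W])
  (FP : Fe F a P) (FQ : Fe F a Q) (Fonly : forall c, Fe F a c -> (c == P) || (c == Q)).

Lemma PQ : P != Q. Proof. by move: HU; rewrite /= !inE; case: (P == Q). Qed.
Lemma PW : P != W. Proof. by move: HU; rewrite /= !inE; case: (P == W); rewrite ?orbT. Qed.
Lemma QW : Q != W. Proof. by move: HU; rewrite /= !inE; case: (Q == W); rewrite ?andbF. Qed.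

Lemma inN c : (c \in N r a) = [|| c == P, c == Q | c == W].
Proof. by rewrite HN !inE -orbA. Qed.

Lemma FW : Fe F a W = false.
Proof. by apply/negP => /Fonly; rewrite (eq_sym W P) (negbTE PW) (eq_sym W Q) (negbTE QW). Qed.

Definition Sb (b : bool * bool) : {set vt} :=
  [set c | [|| (c == P) && b.1, (c == Q) && b.2 | (c == W) && (b.1 (+) b.2)]].
Definition code (c : vt) := if c == P then Cp else if c == Q then Cq else Cw.
Definition nbk k := match k with Cp => P | Cq => Q | Cw => W end.
Definition decS (A : {set vt}) := (P \in A, Q \in A).

Lemma code_nbk k : code (nbk k) = k.
Proof.
case: k; rewrite /code /= ?eqxx //; first by rewrite (eq_sym Q P) (negbTE PQ).
by rewrite (eq_sym W P) (negbTE PW) (eq_sym W Q) (negbTE QW).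
Qed.

Lemma nbk_code c : c \in N r a -> nbk (code c) = c.
Proof. by rewrite inN /code; case: eqP => [->|_] //; case: eqP => [->|_] //= /eqP ->. Qed.

Lemma nbk_inj : injective nbk.
Proof. by move=> k k' e; rewrite -(code_nbk k) e code_nbk. Qed.

Lemma nbk_N k : nbk k \in N r a.
Proof. by rewrite inN; case: k; rewrite /= eqxx ?orbT. Qed.

Lemma in_Sb k b : (nbk k \in Sb b) = bitc k b.
Proof.
rewrite inE; case: k => /=; rewrite ?eqxx ?(eq_sym Q P) ?(eq_sym W P) ?(eq_sym W Q)
  ?(negbTE PQ) ?(negbTE PW) ?(negbTE QW) /=; by case: b => [[] []].
Qed.

Lemma Sb_sub b : Sb b \subset N r a.
Proof. by apply/subsetP => c; rewrite inE inN; case: (c == P); case: (c == Q); case: (c == W); case: b => [[] []]. Qed.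

Lemma Sb_even b : ~~ odd #|Sb b|.
Proof.
have E : Sb b = if b.1 then (if b.2 then [set P; Q] else [set P; W])
                 else (if b.2 then [set Q; W] else set0).
  apply/setP => c; rewrite !inE; case: b => [[] []] /=; rewrite ?inE ?andbF ?andbT ?orbF //.
by rewrite E; case: b {E} => [[] []] /=; rewrite ?cards0 ?cards2 ?PQ ?PW ?QW.
Qed.

Lemma Sb_inner b : inner_ok r a (Sb b).
Proof. by rewrite /inner_ok Sb_sub Sb_even. Qed.

Lemma decSK b : decS (Sb b) = b.
Proof.
by rewrite /decS -[P]/(nbk Cp) -[Q]/(nbk Cq) !in_Sb; case: b.
Qed.

Lemma Sb_dec A : inner_ok r a A -> A = Sb (decS A).
Proof.
case/andP => /subsetP sub ev.
have cardA : #|A| = (P \in A) + (Q \in A) + (W \in A).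
  rewrite (cardsD1 P) (cardsD1 Q (A :\ P)) (cardsD1 W (A :\ P :\ Q)).
  have -> : #|A :\ P :\ Q :\ W| = 0.
    apply/eqP; rewrite cards_eq0; apply/eqP/setP => c; rewrite !inE.
    apply/negP => /and4P [cW cQ cP /sub]; rewrite inN.
    by rewrite (negbTE cW) (negbTE cQ) (negbTE cP).
  rewrite !in_setD1 (eq_sym Q P) (negbTE PQ) (eq_sym W P) (negbTE PW) (eq_sym W Q) (negbTE QW) /=.
  by rewrite addn0 !addnA.
apply/setP => c; rewrite inE /decS.
case: (boolP (c \in N r a)) => [|cN]; last first.
  apply/idP/idP => [/sub|]; first by rewrite (negbTE cN).
  by move: cN; rewrite inN; case: (c == P); case: (c == Q); case: (c == W).
rewrite inN => /or3P [] /eqP ->; rewrite eqxx.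
- by rewrite ?(eq_sym Q P) ?(eq_sym W P) ?(eq_sym W Q) ?(negbTE PQ) ?(negbTE PW) ?(negbTE QW) /= ?orbF.
- by rewrite ?(eq_sym Q P) ?(eq_sym W P) ?(eq_sym W Q) ?(negbTE PQ) ?(negbTE PW) ?(negbTE QW) /= ?orbF.
- rewrite ?(eq_sym Q P) ?(eq_sym W P) ?(eq_sym W Q) ?(negbTE PQ) ?(negbTE PW) ?(negbTE QW) /= ?orbF.
  move: ev; rewrite cardA.
  by case: (P \in A); case: (Q \in A); case: (W \in A).
Qed.

Lemma Sb_inj : injective Sb.
Proof. by move=> b b' e; rewrite -(decSK b) e decSK. Qed.

Lemma D_nbk (f g : U * V -> bool) k :
  Fe F a (nbk k) && (fv f a (nbk k) != fv g a (nbk k)) =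
  dfl (fv f a P != fv g a P) (fv f a Q != fv g a Q) k.
Proof. by case: k => /=; rewrite ?FP ?FQ ?FW. Qed.

Lemma extH_nbk (h : U * V -> bool) k b :
  extH F h (inr (a, nbk k, bitc k b)) = ~~ extok (fv h a P) (fv h a Q) k b.
Proof. by case: k => /=; rewrite ?FP ?FQ ?FW ?negbK. Qed.

Lemma Fe_PQ c : Fe F a c -> c = nbk Cp \/ c = nbk Cq.
Proof. by case/Fonly/orP => /eqP ->; [left | right]. Qed.
End Gad.

Section Main.
Variables (U V : finType) (r : U -> V -> bool).
Local Notation vt := (vtx U V).
Local Notation HVt := (HV U V).
Local Notation X := (Xt r).
Local Notation Y := (Yt r).
Variable F : {set U * V}.
Hypothesis HF : two_factor r F.
Hypothesis Hcubic : cubic r.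
Variables (f g : U * V -> bool) (mu1 mu2 : X -> Y) (muI1 muI2 : Y -> X).
Hypotheses (H1 : in_muFf r F f mu1) (H2 : in_muFf r F g mu2).
Hypotheses (mu1K : cancel mu1 muI1) (muI1K : cancel muI1 mu1).
Hypotheses (mu2K : cancel mu2 muI2) (muI2K : cancel muI2 mu2).

Definition D (a c : vt) := Fe F a c && (fv f a c != fv g a c).
Lemma D_sym a c : D a c = D c a. Proof. by rewrite /D Fe_sym fv_sym (fv_sym g). Qed.

Definition thetaH (z : HVt) : HVt :=
  match z with inl _ => z | inr (a, c, i) => inr (a, c, i (+) D a c) end.
Lemma thetaHK : involutive thetaH.
Proof. by case=> [//|[[a c] i]] /=; rewrite -addbA addbb addbF. Qed.
Lemma thetaH_X z : (thetaH z \in Xset r) = (z \in Xset r).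
Proof. by rewrite !inX; case: z => [//|[[a c] i]]. Qed.
Lemma thetaH_Y z : (thetaH z \in Yset r) = (z \in Yset r).
Proof. by rewrite !inY; case: z => [//|[[a c] i]]. Qed.

Lemma ext_thetaf z : extH F f (thetaH z) = extH F g z.
Proof.
case: z => [//|[[a c] i]] /=; rewrite /D.
by case: (Fe F a c) => //=; case: (fv f a c); case: (fv g a c); case: i.
Qed.
Lemma ext_thetag z : extH F g (thetaH z) = extH F f z.
Proof. by rewrite -ext_thetaf thetaHK. Qed.

Definition thX (x : X) : X := Sub (thetaH (val x)) (etrans (thetaH_X _) (valP x)).
Definition thY (y : Y) : Y := Sub (thetaH (val y)) (etrans (thetaH_Y _) (valP y)).
Lemma thXK : involutive thX.
Proof. by move=> x; apply: val_inj; rewrite /= thetaHK. Qed.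
Lemma thYK : involutive thY.
Proof. by move=> x; apply: val_inj; rewrite /= thetaHK. Qed.

Definition gad (z : HVt) : vt := match z with inl (a, _) => a | inr (a, _, _) => a end.
Definition nbOf (z : HVt) : vt := match z with inl (a, _) => a | inr (_, c, _) => c end.
Definition setOf (z : HVt) : {set vt} := match z with inl (_, A) => A | _ => set0 end.

Definition Pi (x : X) : X := muI2 (thY (mu1 (thX x))).

Lemma Pi_ext x a c i : val x = inr (a, c, i) -> extH F g (inr (a, c, i)) -> Pi x = x.
Proof.
move=> Ex e; apply: val_inj.
have E1 : val (thX x) = inr (a, c, i (+) D a c) by rewrite /= Ex.
have := mu_outer H1 E1; rewrite -[inr (a, c, _)]/(thetaH (inr (a, c, i))) ext_thetaf e => E2.
have E3 : val (thY (mu1 (thX x))) = inr (c, a, i).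
  by rewrite /= E2 /= D_sym -addbA addbb addbF.
have := muI_outer H2 mu2K muI2K E3; rewrite -extH_sym e.
by rewrite /Pi Ex.
Qed.

Lemma gad_Pi x : gad (val (Pi x)) = gad (val x).
Proof.
case Ex: (val x) => [[a A]|[[a c] i]].
  have Ex' : val (thX x) = inl (a, A) by rewrite /= Ex.
  have [c _ [E1 nE1]] := mu_inner H1 mu1K Ex'.
  have E2 : val (thY (mu1 (thX x))) = thetaH (inr (a, c, c \in A)) by rewrite /= E1.
  move: (muI_outer H2 mu2K muI2K E2).
  rewrite -[inr (a, c, _ (+) _)]/(thetaH (inr (a, c, c \in A))).
  rewrite ext_thetag (negbTE nE1) => -[A' [EA _]].
  by rewrite /Pi EA.
case: (boolP (extH F g (inr (a, c, i)))) => e; first by rewrite (Pi_ext Ex e) Ex.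
have E1 : val (thX x) = inr (a, c, i (+) D a c) by rewrite /= Ex.
have := mu_outer H1 E1; rewrite -[inr (a, c, _)]/(thetaH (inr (a, c, i))) ext_thetaf (negbTE e).
case=> A [E2 _].
have E3 : val (thY (mu1 (thX x))) = inl (a, A) by rewrite /= E2.
have [c' _ [E4 _]] := muI_inner H2 muI2K E3.
by rewrite /Pi E4.
Qed.

Section UB.
Variables (u : U) (P Q W : vt).
Local Notation a := (inl u : vt).
Hypotheses (HN : N r a = [set P; Q; W]) (HU : uniq [:: P; Q; W])
  (FP : Fe F a P) (FQ : Fe F a Q) (Fo : forall c, Fe F a c -> (c == P) || (c == Q)).

Lemma phi_proof b : inl (a, Sb P Q W b) \in Xset r.
Proof. by rewrite inX /= (Sb_inner HN HU). Qed.
Definition phi b : X := Sub (inl (a, Sb P Q W b)) (phi_proof b).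
Lemma phi_inj : injective phi.
Proof. by move=> b b' /(congr1 val) [] /Sb_inj; apply. Qed.

Definition cU (mu : X -> Y) b := code P Q (nbOf (val (mu (phi b)))).

Lemma cU_rep h mu muI (Hm : in_muFf r F h mu) (muK : cancel mu muI) b :
  val (mu (phi b)) = inr (a, nbk P Q W (cU mu b), bitc (cU mu b) b) /\
  ~~ extH F h (inr (a, nbk P Q W (cU mu b), bitc (cU mu b) b)).
Proof.
have [c nb [E nE]] := mu_inner Hm muK (erefl : val (phi b) = inl (a, Sb P Q W b)).
have cN : c \in N r a by rewrite inE.
have ec : nbk P Q W (cU mu b) = c by rewrite /cU E /= (nbk_code HN cN).
by rewrite ec -(in_Sb HU) ec.
Qed.

Lemma cU_valid h mu muI (Hm : in_muFf r F h mu) (muK : cancel mu muI) :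
  Valid (fv h a P) (fv h a Q) (cU mu).
Proof.
apply: ValidP => [b|b b' e1 e2].
  have [_ nE] := cU_rep Hm muK b.
  by rewrite (extH_nbk HU FP FQ Fo) negbK in nE.
have [E1 _] := cU_rep Hm muK b; have [E2 _] := cU_rep Hm muK b'.
apply: phi_inj; apply: (can_inj muK); apply: val_inj.
by rewrite E1 E2 e2 e1.
Qed.

Definition sigU b := decS P Q (setOf (val (Pi (phi b)))).

Lemma Pi_phi b : Pi (phi b) = phi (sigU b) /\
  val (thY (mu1 (phi b))) = inr (a, nbk P Q W (cU mu1 b),
     bitc (cU mu1 b) b (+) dfl (fv f a P != fv g a P) (fv f a Q != fv g a Q) (cU mu1 b)).
Proof.
have [E1 nE1] := cU_rep H1 mu1K b.
have thx : thX (phi b) = phi b by apply: val_inj.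
have E2 : val (thY (mu1 (phi b))) = inr (a, nbk P Q W (cU mu1 b),
     bitc (cU mu1 b) b (+) dfl (fv f a P != fv g a P) (fv f a Q != fv g a Q) (cU mu1 b)).
  by rewrite /= E1 /= /D (D_nbk HU FP FQ Fo).
split => //.
have eg : extH F g (inr (a, nbk P Q W (cU mu1 b), bitc (cU mu1 b) b (+)
    dfl (fv f a P != fv g a P) (fv f a Q != fv g a Q) (cU mu1 b))) = false.
  rewrite -(D_nbk HU FP FQ Fo f g).
  change (extH F g (thetaH (inr (a, nbk P Q W (cU mu1 b), bitc (cU mu1 b) b))) = false).
  by rewrite ext_thetag (negbTE nE1).
move: (muI_outer H2 mu2K muI2K E2); rewrite eg.
case=> A [EA _].
have iA : inner_ok r a A.
  by have := valP (muI2 (thY (mu1 (phi b)))); rewrite EA inX => /andP [].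
by apply: val_inj; rewrite /sigU /Pi thx EA /= -(Sb_dec HN HU iA).
Qed.

Lemma sigU_rel b : cU mu2 (sigU b) = cU mu1 b /\
  bitc (cU mu1 b) (sigU b) = bitc (cU mu1 b) b (+)
     dfl (fv f a P != fv g a P) (fv f a Q != fv g a Q) (cU mu1 b).
Proof.
have [E E2] := Pi_phi b.
have [E3 _] := cU_rep H2 mu2K (sigU b).
have : val (mu2 (phi (sigU b))) = val (thY (mu1 (phi b))).
  by rewrite -E /Pi muI2K; congr (val (thY (mu1 _))); apply: val_inj.
rewrite E3 E2 => -[/(nbk_inj HU) e1 e2].
by move: e2; rewrite e1.
Qed.
End UB.

Section VB.
Variables (v : V) (P Q W : vt).
Local Notation a := (inr v : vt).
Hypotheses (HN : N r a = [set P; Q; W]) (HU : uniq [:: P; Q; W])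
  (FP : Fe F a P) (FQ : Fe F a Q) (Fo : forall c, Fe F a c -> (c == P) || (c == Q)).

Lemma psi_proof b : inl (a, Sb P Q W b) \in Yset r.
Proof. by rewrite inY /= (Sb_inner HN HU). Qed.
Definition psi b : Y := Sub (inl (a, Sb P Q W b)) (psi_proof b).
Lemma psi_inj : injective psi.
Proof. by move=> b b' /(congr1 val) [] /Sb_inj; apply. Qed.

Definition cV (muI : Y -> X) b := code P Q (nbOf (val (muI (psi b)))).

Lemma cV_rep h mu muI (Hm : in_muFf r F h mu) (muIK : cancel muI mu) b :
  val (muI (psi b)) = inr (a, nbk P Q W (cV muI b), bitc (cV muI b) b) /\
  ~~ extH F h (inr (a, nbk P Q W (cV muI b), bitc (cV muI b) b)).
Proof.
have [c nb [E nE]] := muI_inner Hm muIK (erefl : val (psi b) = inl (a, Sb P Q W b)).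
have cN : c \in N r a by rewrite inE.
have ec : nbk P Q W (cV muI b) = c by rewrite /cV E /= (nbk_code HN cN).
by rewrite ec -(in_Sb HU) ec.
Qed.

Lemma cV_valid h mu muI (Hm : in_muFf r F h mu) (muIK : cancel muI mu) :
  Valid (fv h a P) (fv h a Q) (cV muI).
Proof.
apply: ValidP => [b|b b' e1 e2].
  have [_ nE] := cV_rep Hm muIK b.
  by rewrite (extH_nbk HU FP FQ Fo) negbK in nE.
have [E1 _] := cV_rep Hm muIK b; have [E2 _] := cV_rep Hm muIK b'.
apply: psi_inj; apply: (can_inj muIK); apply: val_inj.
by rewrite E1 E2 e2 e1.
Qed.

Definition sigV b := decS P Q (setOf (val (mu1 (thX (muI2 (psi b)))))).

Lemma Pi_psi b : mu1 (thX (muI2 (psi b))) = psi (sigV b) /\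
  val (thX (muI2 (psi b))) = inr (a, nbk P Q W (cV muI2 b),
     bitc (cV muI2 b) b (+) dfl (fv f a P != fv g a P) (fv f a Q != fv g a Q) (cV muI2 b)).
Proof.
have [E1 nE1] := cV_rep H2 muI2K b.
have E2 : val (thX (muI2 (psi b))) = inr (a, nbk P Q W (cV muI2 b),
     bitc (cV muI2 b) b (+) dfl (fv f a P != fv g a P) (fv f a Q != fv g a Q) (cV muI2 b)).
  by rewrite /= E1 /= /D (D_nbk HU FP FQ Fo).
split => //.
have ef : extH F f (inr (a, nbk P Q W (cV muI2 b), bitc (cV muI2 b) b (+)
    dfl (fv f a P != fv g a P) (fv f a Q != fv g a Q) (cV muI2 b))) = false.
  rewrite -(D_nbk HU FP FQ Fo f g).
  change (extH F f (thetaH (inr (a, nbk P Q W (cV muI2 b), bitc (cV muI2 b) b))) = false).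
  by rewrite ext_thetaf (negbTE nE1).
move: (mu_outer H1 E2); rewrite ef.
case=> A [EA _].
have iA : inner_ok r a A.
  by have := valP (mu1 (thX (muI2 (psi b)))); rewrite EA inY => /andP [].
by apply: val_inj; rewrite /sigV EA /= -(Sb_dec HN HU iA).
Qed.

Lemma Pi_psi' b : Pi (muI2 (psi b)) = muI2 (psi (sigV b)).
Proof.
have [E _] := Pi_psi b; rewrite /Pi E; congr muI2; exact: val_inj.
Qed.

Lemma sigV_rel b : cV muI1 (sigV b) = cV muI2 b /\
  bitc (cV muI2 b) (sigV b) = bitc (cV muI2 b) b (+)
     dfl (fv g a P != fv f a P) (fv g a Q != fv f a Q) (cV muI2 b).
Proof.
have [E E2] := Pi_psi b.
have [E3 _] := cV_rep H1 muI1K (sigV b).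
have : val (muI1 (psi (sigV b))) = val (thX (muI2 (psi b))) by rewrite -E mu1K.
rewrite E3 E2 => -[/(nbk_inj HU) e1 e2].
move: e2; rewrite e1 => ->; split => //; congr (_ (+) _); by case: (cV muI2 b) => //=; rewrite eq_sym.
Qed.
End VB.

Section Perm.
Variables (n : nat) (eta : X -> 'I_n) (etai : 'I_n -> X) (eta' : Y -> 'I_n) (etai' : 'I_n -> Y).
Hypotheses (etaK : cancel eta etai) (etaiK : cancel etai eta).
Hypotheses (eta'K : cancel eta' etai') (etai'K : cancel etai' eta').
Variables (s1 s2 : 'S_n).
Hypotheses (Hs1 : forall x, s1 (eta x) = eta' (mu1 x)) (Hs2 : forall x, s2 (eta x) = eta' (mu2 x)).

Lemma tX_inj : injective (fun i => eta (thX (etai i))).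
Proof. by move=> i j /(can_inj etaK) /(can_inj thXK) /(can_inj etaiK). Qed.
Lemma tY_inj : injective (fun i => eta' (thY (etai' i))).
Proof. by move=> i j /(can_inj eta'K) /(can_inj thYK) /(can_inj etai'K). Qed.
Definition tX : 'S_n := perm tX_inj.
Definition tY : 'S_n := perm tY_inj.
Lemma tXE x : tX (eta x) = eta (thX x). Proof. by rewrite permE etaK. Qed.
Lemma tYE y : tY (eta' y) = eta' (thY y). Proof. by rewrite permE eta'K. Qed.

Definition pi' : 'S_n := (tX * s1 * tY * s2^-1)%g.
Lemma piE x : pi' (eta x) = eta (Pi x).
Proof.
rewrite /pi' !permM tXE Hs1 tYE.
by rewrite -{1}(muI2K (thY (mu1 (thX x)))) -Hs2 permK.
Qed.

Definition blkX (i : 'I_n) := gad (val (etai i)).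
Definition blkY (i : 'I_n) := gad (val (etai' i)).

Lemma hbPi i : blkX (pi' i) = blkX i.
Proof. by rewrite /blkX -{1}(etaiK i) piE etaK gad_Pi. Qed.
Lemma hbX i : blkX (tX i) = blkX i.
Proof. by rewrite /blkX -{1}(etaiK i) tXE etaK /=; case: (val (etai i)) => [[]|[[]]]. Qed.
Lemma hbY i : blkY (tY i) = blkY i.
Proof. by rewrite /blkY -{1}(etai'K i) tYE eta'K /=; case: (val (etai' i)) => [[]|[[]]]. Qed.

Lemma odd_s : odd_perm pi' = odd_perm tX (+) odd_perm s1 (+) odd_perm tY (+) odd_perm s2.
Proof. by rewrite /pi' !odd_permM odd_permV. Qed.


Section BU.
Variables (u : U) (P Q W : vt).
Local Notation a := (inl u : vt).
Hypotheses (HN : N r a = [set P; Q; W]) (HU : uniq [:: P; Q; W])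
  (FP : Fe F a P) (FQ : Fe F a Q) (Fo : forall c, Fe F a c -> (c == P) || (c == Q)).

Lemma blockU_pi : odd_perm (rb hbPi a) =
  (fv f a P != fv g a P) (+) (fv f a Q != fv g a Q).
Proof.
rewrite (@odd_alg _ (map (fun b => eta (phi HN HU b)) bb4)); last first.
  move=> z zn; rewrite rbE; case: eqP => // bz; exfalso.
  move: bz zn; rewrite /blkX -(etaiK z) etaK.
  case Ex: (val (etai z)) => [[a' A]|[[a' c] i]] /= ea; subst a'.
    have iA : inner_ok r a A by have := valP (etai z); rewrite Ex inX => /andP [].
    have -> : etai z = phi HN HU (decS P Q A).
      by apply: val_inj; rewrite Ex /= -(Sb_dec HN HU iA).
    by case: (decS P Q A) => [[] []]; rewrite !inE eqxx ?orbT.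
  by have := valP (etai z); rewrite Ex inX.
rewrite (@alg_transport _ _ (fun b => eta (phi HN HU b)) _ _ (sigU HN HU)).
- exact: local_parity (cU_valid HN HU FP FQ Fo H1 mu1K) (cU_valid HN HU FP FQ Fo H2 mu2K)
    (sigU_rel HN HU FP FQ Fo).
- by move=> b b' /(can_inj etaK) /phi_inj.
- move=> b _; rewrite rbE /blkX etaK /= eqxx piE.
  by rewrite (proj1 (Pi_phi HN HU FP FQ Fo b)).
Qed.

Lemma blockU_X : odd_perm (rb hbX a) = false.
Proof.
rewrite (@odd_alg _ [::]) // => z _; rewrite rbE; case: eqP => // bz.
move: bz; rewrite /blkX -(etaiK z) etaK tXE.
case Ex: (val (etai z)) => [[a' A]|[[a' c] i]] /= ea.
  by congr eta; apply: val_inj; rewrite /= Ex.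
by subst a'; have := valP (etai z); rewrite Ex inX.
Qed.

Lemma om_proof b : inr (a, (if b.1 then Q else P), b.2) \in Yset r.
Proof. by rewrite inY /outer_ok; apply/andP; split => //; case: b.1; apply: (Fe_nbr HF). Qed.
Definition om b : Y := Sub (inr (a, (if b.1 then Q else P), b.2)) (om_proof b).

Lemma blockU_Y : odd_perm (rb hbY a) =
  (fv f a P != fv g a P) (+) (fv f a Q != fv g a Q).
Proof.
rewrite (@odd_alg _ (map (fun b => eta' (om b)) bb4)); last first.
  move=> z zn; rewrite rbE; case: eqP => // bz.
  move: bz zn; rewrite /blkY -(etai'K z) eta'K tYE.
  case Ey: (val (etai' z)) => [[a' A]|[[a' c] j]] /= ea; subst a'.
    by have := valP (etai' z); rewrite Ey inY.
  case: (boolP (D a c)) => Dc; last first.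
    by move=> _; congr eta'; apply: val_inj; rewrite /= Ey /= (negbTE Dc) addbF.
  have Fc : Fe F a c by move: Dc; rewrite /D => /andP [].
  have [ec|ec] := @Fe_PQ _ _ F a P Q W Fo c Fc.
    have -> : etai' z = om (false, j) by apply: val_inj; rewrite Ey ec.
    by case: j {Ey}; rewrite !inE eqxx ?orbT.
  have -> : etai' z = om (true, j) by apply: val_inj; rewrite Ey ec.
  by case: j {Ey}; rewrite !inE eqxx ?orbT.
rewrite (@alg_transport _ _ (fun b => eta' (om b)) _ _
   (fun b => (b.1, b.2 (+) (if b.1 then fv f a Q != fv g a Q else fv f a P != fv g a P)))).
- exact: alg_tau.
- move=> [x y] [x' y'] /(can_inj eta'K) /(congr1 val) /= [e ->]; congr pair.
  by move: e; case: x; case: x' => // e; have := PQ HU; rewrite e eqxx.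
- move=> [x y] _; rewrite rbE /blkY eta'K /= eqxx tYE; congr eta'; apply: val_inj => /=.
  by case: x; rewrite /D ?FP ?FQ.
Qed.
End BU.

Section BV.
Variables (v : V) (P Q W : vt).
Local Notation a := (inr v : vt).
Hypotheses (HN : N r a = [set P; Q; W]) (HU : uniq [:: P; Q; W])
  (FP : Fe F a P) (FQ : Fe F a Q) (Fo : forall c, Fe F a c -> (c == P) || (c == Q)).

Lemma blockV_pi : odd_perm (rb hbPi a) =
  (fv g a P != fv f a P) (+) (fv g a Q != fv f a Q).
Proof.
rewrite (@odd_alg _ (map (fun b => eta (muI2 (psi HN HU b))) bb4)); last first.
  move=> z zn; rewrite rbE; case: eqP => // bz.
  move: bz zn; rewrite /blkX -(etaiK z) etaK piE.
  case Ex: (val (etai z)) => [[a' A]|[[a' c] i]] /= ea; subst a'.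
    by have := valP (etai z); rewrite Ex inX.
  case: (boolP (extH F g (inr (a, c, i)))) => e.
    by rewrite (Pi_ext Ex e).
  move: (mu_outer H2 Ex); rewrite (negbTE e) => -[A [EA _]].
  have iA : inner_ok r a A by have := valP (mu2 (etai z)); rewrite EA inY => /andP [].
  have -> : etai z = muI2 (psi HN HU (decS P Q A)).
    apply: (can_inj mu2K); rewrite muI2K; apply: val_inj.
    by rewrite EA /= -(Sb_dec HN HU iA).
  by case: (decS P Q A) => [[] []]; rewrite !inE eqxx ?orbT.
rewrite (@alg_transport _ _ (fun b => eta (muI2 (psi HN HU b))) _ _ (sigV HN HU)).
- exact: local_parity (cV_valid HN HU FP FQ Fo H2 muI2K) (cV_valid HN HU FP FQ Fo H1 muI1K)
    (sigV_rel HN HU FP FQ Fo).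
- by move=> b b' /(can_inj etaK) /(can_inj muI2K) /psi_inj.
- move=> b _; rewrite rbE /blkX etaK.
  have [E _] := cV_rep HN HU H2 muI2K b.
  by rewrite E /= eqxx piE (Pi_psi' HN HU FP FQ Fo b).
Qed.

Lemma blockV_Y : odd_perm (rb hbY a) = false.
Proof.
rewrite (@odd_alg _ [::]) // => z _; rewrite rbE; case: eqP => // bz.
move: bz; rewrite /blkY -(etai'K z) eta'K tYE.
case Ey: (val (etai' z)) => [[a' A]|[[a' c] i]] /= ea.
  by congr eta'; apply: val_inj; rewrite /= Ey.
by subst a'; have := valP (etai' z); rewrite Ey inY.
Qed.

Lemma omX_proof b : inr (a, (if b.1 then Q else P), b.2) \in Xset r.
Proof. by rewrite inX /outer_ok; apply/andP; split => //; case: b.1; apply: (Fe_nbr HF). Qed.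
Definition omX b : X := Sub (inr (a, (if b.1 then Q else P), b.2)) (omX_proof b).

Lemma blockV_X : odd_perm (rb hbX a) =
  (fv f a P != fv g a P) (+) (fv f a Q != fv g a Q).
Proof.
rewrite (@odd_alg _ (map (fun b => eta (omX b)) bb4)); last first.
  move=> z zn; rewrite rbE; case: eqP => // bz.
  move: bz zn; rewrite /blkX -(etaiK z) etaK tXE.
  case Ex: (val (etai z)) => [[a' A]|[[a' c] j]] /= ea; subst a'.
    by have := valP (etai z); rewrite Ex inX.
  case: (boolP (D a c)) => Dc; last first.
    by move=> _; congr eta; apply: val_inj; rewrite /= Ex /= (negbTE Dc) addbF.
  have Fc : Fe F a c by move: Dc; rewrite /D => /andP [].
  have [ec|ec] := @Fe_PQ _ _ F a P Q W Fo c Fc.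
    have -> : etai z = omX (false, j) by apply: val_inj; rewrite Ex ec.
    by case: j {Ex}; rewrite !inE eqxx ?orbT.
  have -> : etai z = omX (true, j) by apply: val_inj; rewrite Ex ec.
  by case: j {Ex}; rewrite !inE eqxx ?orbT.
rewrite (@alg_transport _ _ (fun b => eta (omX b)) _ _
   (fun b => (b.1, b.2 (+) (if b.1 then fv f a Q != fv g a Q else fv f a P != fv g a P)))).
- exact: alg_tau.
- move=> [x y] [x' y'] /(can_inj etaK) /(congr1 val) /= [e ->]; congr pair.
  by move: e; case: x; case: x' => // e; have := PQ HU; rewrite e eqxx.
- move=> [x y] _; rewrite rbE /blkX etaK /= eqxx tXE; congr eta; apply: val_inj => /=.
  by case: x; rewrite /D ?FP ?FQ.
Qed.
End BV.

Lemma block_eq b : odd_perm (rb hbPi b) = odd_perm (rb hbX b) (+) odd_perm (rb hbY b).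
Proof.
have [P [Q [W [HN HU FP FQ Fo]]]] := gadget_struct HF Hcubic b.
case: b HN FP FQ Fo => [u|v] HN FP FQ Fo.
  by rewrite (blockU_pi HN HU FP FQ Fo) blockU_X (blockU_Y HU FP FQ Fo).
rewrite (blockV_pi HN HU FP FQ Fo) blockV_Y (blockV_X HU FP FQ Fo) addbF.
by rewrite (eq_sym (fv g _ P)) (eq_sym (fv g _ Q)).
Qed.

Lemma main_odd : odd_perm s1 = odd_perm s2.
Proof.
have := odd_s.
have -> : odd_perm pi' = odd_perm tX (+) odd_perm tY.
  rewrite (odd_blocks hbPi) (odd_blocks hbX) (odd_blocks hbY) -big_split.
  by apply: eq_bigr => b _; exact: block_eq.
by case: (odd_perm tX); case: (odd_perm tY); case: (odd_perm s1); case: (odd_perm s2).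
Qed.
End Perm.
End Main.


Theorem mainTheorem5 (U V : finType) (r : U -> V -> bool) (Hcubic : cubic r)
  (eta : Xt r -> 'I_(10 * #|U|)) (eta' : Yt r -> 'I_(10 * #|U|))
  (Heta : bijective eta) (Heta' : bijective eta')
  (F : {set U * V}) (HF : two_factor r F) (f g : U * V -> bool)
  (mu1 mu2 : Xt r -> Yt r) (H1 : in_muFf r F f mu1) (H2 : in_muFf r F g mu2)
  (s1 s2 : 'S_(10 * #|U|))
  (Hs1 : forall x : Xt r, s1 (eta x) = eta' (mu1 x))
  (Hs2 : forall x : Xt r, s2 (eta x) = eta' (mu2 x)) :
  odd_perm s1 = odd_perm s2.
Proof.
case: Heta => etai etaK etaiK; case: Heta' => etai' eta'K etai'K.
have [[[muI1 mu1K muI1K] _] _] := H1.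
have [[[muI2 mu2K muI2K] _] _] := H2.
exact: (main_odd HF Hcubic H1 H2 mu1K muI1K mu2K muI2K etaK etaiK eta'K etai'K Hs1 Hs2).
Qed.
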